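(* For every regular language $L\subseteq\Sigma^*$, there is an isomorphism of $\mathbf{JSL}$-dfas $\mathcal{P}(\mathrm{Syn}(L^r))\cong[\mathrm{BLRQ}(L)]^{\mathsf{op}}$ given by \[\{[w_1]_{L^r},\ldots,[w_n]_{L^r}\}\mapsto\bigcap_{i=1}^n\overline{\mathrm{At}(w_i^r)},\] where $\mathrm{At}(x)$ is the unique atom of the boolean algebra $\mathrm{BLRQ}(L)$ containing the word $x$.
   Context: $w^r$ is the reversal of $w$, $L^r=\{w^r:w\in L\}$, $\overline{K}=\Sigma^*\setminus K$, $u^{-1}Lv^{-1}=\{w:uwv\in L\}$. $\mathrm{BLRQ}(L)$ is the boolean subalgebra of $\mathcal{P}(\Sigma^* )$ generated by all two-sided derivatives $u^{-1}Lv^{-1}$, viewed as a $\mathbf{JSL}$-dfa with order $\subseteq$, transitions $K\mapsto a^{-1}K$, initial state $L$, final states the $K$ containing $\epsilon$. The syntactic congruence of a language $K$ is $v\equiv_K w\iff(\forall x,y:\ xvy\in K\Leftrightarrow xwy\in K)$; $[w]_K$ denotes the class of $w$ and $\mathrm{Syn}(K)=\Sigma^*/{\equiv_K}$ is the syntactic monoid, viewed as a dfa with transitions $[w]_K\xrightarrow{a}[wa]_K$, initial state $[\epsilon]_K$, final states $\{[w]_K:w\in K\}$. For a dfa $D$ with state set $Q$, $\mathcal{P}(D)$ is the $\mathbf{JSL}$-dfa with states $(\mathcal{P}(Q),\cup)$, transitions $X\mapsto\delta_a[X]$, initial state $\{q_0\}$, final states the subsets meeting the final states. A $\mathbf{JSL}$-dfa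 is a finite semilattice with join-preserving transitions, an initial state $s_0$ and final states $\{s:s\not\le s_f\}$ for some $s_f$; morphisms are join-preserving maps preserving transitions, initial and final states (both ways). The dual $A^{\mathsf{op}}$ has reversed order, transitions $\delta_a^*(s)=$ largest $t$ with $\delta_a(t)\le s$, initial state the largest non-final state of $A$, final states $\{s:s_0\not\le s\}$. *)

(* Defs.v *)
From mathcomp Require Import all_boot.
From Stdlib Require Import ClassicalEpsilon.

Set Implicit Arguments.
Unset Strict Implicit.
Unset Printing Implicit Defensive.

Definition lang (A : Type) := seq A -> Prop.

Definition regular (A : finType) (L : lang A) : Prop :=
  exists (Q : finType) (d : Q -> A -> Q) (q0 : Q) (F : pred Q),
    forall w, L w <-> F (foldl d q0 w).

Definition lrev (A : Type) (L : lang A) : lang A := fun w => L (rev w).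

Inductive BLRQ (A : Type) (L : lang A) : lang A -> Prop :=
| BLRQ_der (u v : seq A) : BLRQ L (fun w => L (u ++ w ++ v))
| BLRQ_empty : BLRQ L (fun _ => False)
| BLRQ_compl K : BLRQ L K -> BLRQ L (fun w => ~ K w)
| BLRQ_union K1 K2 : BLRQ L K1 -> BLRQ L K2 -> BLRQ L (fun w => K1 w \/ K2 w)
| BLRQ_ext K K' : BLRQ L K -> (forall w, K w <-> K' w) -> BLRQ L K'.

Lemma BLRQ_lder (A : Type) (L : lang A) (a : A) K :
  BLRQ L K -> BLRQ L (fun w => K (a :: w)).
Proof.
elim=> [u v| |K1 _ IH|K1 K2 _ IH1 _ IH2|K1 K2 _ IH H].
- apply: (BLRQ_ext (BLRQ_der L (rcons u a) v)) => w.
  by rewrite cat_rcons.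
- exact: BLRQ_empty.
- exact: BLRQ_compl.
- exact: BLRQ_union.
- by apply: (BLRQ_ext IH) => w; apply: H.
Qed.

Lemma BLRQ_self (A : Type) (L : lang A) : BLRQ L L.
Proof. by apply: (BLRQ_ext (BLRQ_der L [::] [::])) => w; rewrite /= cats0. Qed.

(* Atoms of the boolean algebra BLRQ(L) (ordered by inclusion):
   minimal nonempty members. *)
Definition is_atom (A : Type) (L : lang A) (K : lang A) : Prop :=
  BLRQ L K /\ (exists w, K w) /\
  forall K', BLRQ L K' -> (forall w, K' w -> K w) ->
    (forall w, ~ K' w) \/ (forall w, K w -> K' w).

Definition At (A : Type) (L : lang A) (x : seq A) : lang A :=
  epsilon (inhabits (fun _ : seq A => False))
          (fun K => is_atom L K /\ K x).

Record jsl_dfa (A : Type) := JSLDfa {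
  jstate : Type;
  jjoin : jstate -> jstate -> jstate;
  jbot : jstate;
  jdelta : A -> jstate -> jstate;
  jinit : jstate;
  jfinal : jstate -> Prop }.

Definition jle (A : Type) (D : jsl_dfa A) (s t : jstate D) : Prop :=
  jjoin s t = t.

Definition is_largest (T : Type) (le : T -> T -> Prop) (P : T -> Prop) (t : T) :=
  P t /\ forall t', P t' -> le t' t.

Definition jlargest (A : Type) (D : jsl_dfa A) (P : jstate D -> Prop) : jstate D :=
  epsilon (inhabits (jbot D)) (is_largest (@jle A D) P).

Definition jop (A : Type) (D : jsl_dfa A) : jsl_dfa A := {|
  jstate := jstate D;
  jjoin := fun x y => jlargest (fun t => jle t x /\ jle t y);
  jbot := jlargest (fun _ => True);
  jdelta := fun a s => jlargest (fun t => jle (jdelta a t) s);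
  jinit := jlargest (fun s => ~ jfinal s);
  jfinal := fun s => ~ jle (jinit D) s |}.

Definition jsl_morphism (A : Type) (D1 D2 : jsl_dfa A)
    (f : jstate D1 -> jstate D2) : Prop :=
  [/\ forall x y, f (jjoin x y) = jjoin (f x) (f y),
      f (jbot D1) = jbot D2,
      forall a x, f (jdelta a x) = jdelta a (f x),
      f (jinit D1) = jinit D2
    & forall x, jfinal (f x) <-> jfinal x].

Definition jsl_iso (A : Type) (D1 D2 : jsl_dfa A)
    (f : jstate D1 -> jstate D2) : Prop :=
  jsl_morphism f /\ bijective f.

Definition BLRQ_state (A : Type) (L : lang A) := {K : lang A | BLRQ L K}.

Definition BLRQ_dfa (A : Type) (L : lang A) : jsl_dfa A := {|
  jstate := BLRQ_state L;
  jjoin := fun K1 K2 => exist _ (fun w => proj1_sig K1 w \/ proj1_sig K2 w)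
             (BLRQ_union (proj2_sig K1) (proj2_sig K2));
  jbot := exist _ (fun _ => False) (BLRQ_empty L);
  jdelta := fun a K => exist _ (fun w => proj1_sig K (a :: w))
             (BLRQ_lder a (proj2_sig K));
  jinit := exist _ L (BLRQ_self L);
  jfinal := fun K => proj1_sig K [::] |}.

Definition syn_eq (A : Type) (K : lang A) (v w : seq A) : Prop :=
  forall x y, K (x ++ v ++ y) <-> K (x ++ w ++ y).

Definition syn_class (A : Type) (K : lang A) (w : seq A) : lang A :=
  fun v => syn_eq K v w.

Definition Syn (A : Type) (K : lang A) :=
  {S : lang A | exists w, S = syn_class K w}.

Definition syn_cls (A : Type) (K : lang A) (w : seq A) : Syn K :=
  exist _ (syn_class K w) (ex_intro _ w erefl).

Definition PSyn_dfa (A : Type) (K : lang A) : jsl_dfa A := {|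
  jstate := Syn K -> Prop;
  jjoin := fun X Y c => X c \/ Y c;
  jbot := fun _ => False;
  jdelta := fun a X c => exists w, X (syn_cls K w) /\ c = syn_cls K (rcons w a);
  jinit := fun c => c = syn_cls K [::];
  jfinal := fun X => exists c, X c /\ exists w, c = syn_cls K w /\ K w |}.

(* Main.v *)
Require Import Defs.
From mathcomp Require Import all_boot.
From Stdlib Require Import ClassicalEpsilon Classical FunctionalExtensionality PropExtensionality ProofIrrelevance.

Set Implicit Arguments.
Unset Strict Implicit.
Unset Printing Implicit Defensive.

Section Gen.
Variable A : Type.

Lemma exist_eq (T : Type) (P : T -> Prop) x y (px : P x) (py : P y) :
  x = y -> exist P x px = exist P y py.
Proof. by move=> E; subst y; rewrite (proof_irrelevance _ px py). Qed.

Lemma syn_refl (L : lang A) x : syn_eq L x x.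
Proof. by move=> u v. Qed.

Lemma syn_sym (L : lang A) x y : syn_eq L x y -> syn_eq L y x.
Proof. by move=> H u v; apply: iff_sym. Qed.

Lemma syn_trans (L : lang A) x y z : syn_eq L x y -> syn_eq L y z -> syn_eq L x z.
Proof. by move=> H1 H2 u v; apply: iff_trans (H1 u v) (H2 u v). Qed.

Lemma syn_cons (L : lang A) a x y : syn_eq L x y -> syn_eq L (a :: x) (a :: y).
Proof. by move=> H u v /=; rewrite -!cat_rcons; exact: H. Qed.

Lemma lrev_syn (L : lang A) v w : syn_eq (lrev L) v w <-> syn_eq L (rev v) (rev w).
Proof.
split=> H u z.
- have := H (rev z) (rev u); rewrite /lrev !rev_cat !revK -!catA; exact.
- by rewrite /lrev !rev_cat -!catA; exact: H.
Qed.

Lemma cls_eq (K : lang A) v w : syn_cls K v = syn_cls K w -> syn_eq K v w.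
Proof.
move=> E; have := congr1 (fun c => proj1_sig c v) E => /= E'.
change (syn_class K w v); rewrite -E'; exact: syn_refl.
Qed.

Lemma cls_eq2 (K : lang A) v w : syn_eq K v w -> syn_cls K v = syn_cls K w.
Proof.
move=> H; apply: exist_eq.
apply: functional_extensionality => u; apply: propositional_extensionality.
split=> Hu; [exact: syn_trans Hu H | exact: syn_trans Hu (syn_sym H)].
Qed.

Lemma cls_surj (K : lang A) (c : Syn K) : exists w, c = syn_cls K w.
Proof.
case: c => C HC; case: (HC) => w E; exists w; subst C; exact: exist_eq.
Qed.

Definition sat (L K : lang A) := forall x y, syn_eq L x y -> K x -> K y.

Lemma BLRQ_sat (L K : lang A) : BLRQ L K -> sat L K.
Proof.
elim=> [u v| |K1 _ IH|K1 K2 _ IH1 _ IH2|K1 K2 _ IH H] x y Hxy /=.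
- exact: (proj1 (Hxy u v)).
- by [].
- by move=> Hn Hy; apply: Hn; apply: IH (syn_sym Hxy) Hy.
- by case=> H; [left; apply: IH1 Hxy H | right; apply: IH2 Hxy H].
- by move=> /H Hx; apply/H; apply: IH Hxy Hx.
Qed.

Lemma BLRQ_inter (L K1 K2 : lang A) : BLRQ L K1 -> BLRQ L K2 ->
  BLRQ L (fun w => K1 w /\ K2 w).
Proof.
move=> H1 H2.
apply: (BLRQ_ext (BLRQ_compl (BLRQ_union (BLRQ_compl H1) (BLRQ_compl H2)))) => w.
have := classic (K1 w); have := classic (K2 w); tauto.
Qed.

Lemma BLRQ_full (L : lang A) : BLRQ L (fun _ => True).
Proof. apply: (BLRQ_ext (BLRQ_compl (BLRQ_empty L))) => w; split=> // _ []. Qed.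

Lemma BLRQ_bigcap (I : eqType) (L : lang A) (P : I -> lang A) (s : seq I) :
  (forall i, BLRQ L (P i)) -> BLRQ L (fun x => forall i, i \in s -> P i x).
Proof.
move=> HP; elim: s => [|i0 s IH].
  by apply: (BLRQ_ext (BLRQ_full L)).
apply: (BLRQ_ext (BLRQ_inter (HP i0) IH)) => x; split.
- case=> H1 H2 i; rewrite in_cons => /orP [/eqP -> //|]; exact: H2.
- move=> H; split; first by apply: H; exact: mem_head.
  by move=> i Hi; apply: H; rewrite in_cons Hi orbT.
Qed.

Lemma BLRQ_bigcup (I : eqType) (L : lang A) (P : I -> lang A) (s : seq I) :
  (forall i, BLRQ L (P i)) -> BLRQ L (fun x => exists i, i \in s /\ P i x).
Proof.
move=> HP; elim: s => [|i0 s IH].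
  by apply: (BLRQ_ext (BLRQ_empty L)) => x; split=> // [[i []]].
apply: (BLRQ_ext (BLRQ_union (HP i0) IH)) => x; split.
- case=> [H|[i [Hi H]]]; first by exists i0; rewrite mem_head.
  by exists i; rewrite in_cons Hi orbT.
- case=> i []; rewrite in_cons => /orP [/eqP -> H|Hi H]; first by left.
  by right; exists i.
Qed.

Lemma BLRQ_forall_fin (I : finType) (L : lang A) (P : I -> lang A) :
  (forall i, BLRQ L (P i)) -> BLRQ L (fun x => forall i, P i x).
Proof.
move=> HP; apply: (BLRQ_ext (BLRQ_bigcap (enum (@predT I)) HP)) => x.
by split=> H i; [apply: H; rewrite mem_enum | move=> _; apply: H].
Qed.

Lemma BLRQ_exists_fin (I : finType) (L : lang A) (P : I -> lang A) :
  (forall i, BLRQ L (P i)) -> BLRQ L (fun x => exists i, P i x).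
Proof.
move=> HP; apply: (BLRQ_ext (BLRQ_bigcup (enum (@predT I)) HP)) => x.
split; case=> i H; [by case: H => _ H; exists i | by exists i; rewrite mem_enum].
Qed.

Lemma BLRQ_iffc (L : lang A) u v (c : Prop) :
  BLRQ L (fun x => L (u ++ x ++ v) <-> c).
Proof.
case: (classic c) => Hc.
- by apply: (BLRQ_ext (BLRQ_der L u v)) => x; tauto.
- by apply: (BLRQ_ext (BLRQ_compl (BLRQ_der L u v))) => x; tauto.
Qed.

Lemma st_eq (L : lang A) (s t : BLRQ_state L) :
  (forall w, proj1_sig s w <-> proj1_sig t w) -> s = t.
Proof.
case: s => K HK; case: t => K' HK' /= H; apply: exist_eq.
by apply: functional_extensionality => w; apply: propositional_extensionality.
Qed.

Lemma jle_iff (L : lang A) (s t : jstate (BLRQ_dfa L)) :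
  jle s t <-> (forall w, proj1_sig s w -> proj1_sig t w).
Proof.
split.
- move=> E w Hs; have := congr1 (fun z => proj1_sig z w) E => /= <-; by left.
- move=> H; apply: st_eq => w /=; split; [case=> //; exact: H | by right].
Qed.

Lemma jlargest_eq (L : lang A) (P : jstate (BLRQ_dfa L) -> Prop) t :
  is_largest (@jle A (BLRQ_dfa L)) P t -> jlargest P = t.
Proof.
move=> Ht.
have [H1 H2] := epsilon_spec (inhabits (jbot (BLRQ_dfa L)))
   (is_largest (@jle A (BLRQ_dfa L)) P) (ex_intro _ t Ht).
case: Ht => Pt Ht; apply: st_eq => w.
have a := proj1 (jle_iff _ _) (Ht _ H1).
have b := proj1 (jle_iff _ _) (H2 _ Pt).
by split; [exact: a | exact: b].
Qed.

End Gen.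

Section Reg.
Variables (A : Type) (L : lang A) (Q : finType) (d : Q -> A -> Q) (q0 : Q) (F : pred Q).
Hypothesis HL : forall w, L w = F (foldl d q0 w).

Definition tau (x : seq A) : {ffun Q -> Q} := [ffun q => foldl d q x].

Lemma tau_syn x y : tau x = tau y -> syn_eq L x y.
Proof.
move=> E u v; rewrite !HL !foldl_cat.
have -> : foldl d (foldl d q0 u) x = foldl d (foldl d q0 u) y.
  by move: (congr1 (fun f : {ffun Q -> Q} => f (foldl d q0 u)) E); rewrite /= !ffunE.
by [].
Qed.

Lemma class_BLRQ y : BLRQ L (fun x => syn_eq L x y).
Proof.
pose R (k : Q * {ffun Q -> Q}) := exists u v, k = (foldl d q0 u, tau v).
pose Sk (k : Q * {ffun Q -> Q}) x :=
  (F (k.2 (foldl d k.1 x)) : Prop) <-> F (k.2 (foldl d k.1 y)).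
have conv u v x : Sk (foldl d q0 u, tau v) x <-> (L (u ++ x ++ v) <-> L (u ++ y ++ v)).
  by rewrite /Sk /= !ffunE -!foldl_cat -!HL.
have HP : forall k, BLRQ L (fun x => R k -> Sk k x).
  move=> k; case: (classic (R k)) => Hk.
  - case: (Hk) => u [v Ek].
    apply: (BLRQ_ext (BLRQ_iffc L u v (L (u ++ y ++ v)))) => x.
    subst k; split; [by move=> H _; apply/conv | by move=> H; apply/conv; apply: H].
  - by apply: (BLRQ_ext (BLRQ_full L)).
apply: (BLRQ_ext (BLRQ_forall_fin HP)) => x; split.
- move=> H u v; apply/conv; apply: H; by exists u, v.
- move=> H k [u [v Ek]]; subst k; apply/conv; exact: H.
Qed.

Lemma sat_BLRQ K : sat L K -> BLRQ L K.
Proof.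
move=> HK.
pose Pf (f : {ffun Q -> Q}) x := exists y, K y /\ tau y = f /\ syn_eq L x y.
have HP : forall f, BLRQ L (Pf f).
  move=> f; case: (classic (exists y, K y /\ tau y = f)) => [[y0 [Ky0 Ty0]]|Hn].
  - apply: (BLRQ_ext (class_BLRQ y0)) => x; split.
    + by move=> H; exists y0.
    + case=> y [Ky [Ty Hxy]]; apply: syn_trans Hxy _; apply: tau_syn.
      by rewrite Ty Ty0.
  - apply: (BLRQ_ext (BLRQ_empty L)) => x; split=> // [[y [Ky [Ty _]]]].
    by apply: Hn; exists y.
apply: (BLRQ_ext (BLRQ_exists_fin HP)) => x; split.
- by case=> f [y [Ky [_ Hxy]]]; apply: HK (syn_sym Hxy) Ky.
- by move=> Kx; exists (tau x), x; split=> //; split=> //; exact: syn_refl.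
Qed.

Lemma At_eq x : At L x = fun z => syn_eq L z x.
Proof.
have atom : is_atom L (fun z => syn_eq L z x) /\ syn_eq L x x.
  split; last exact: syn_refl.
  split; first exact: class_BLRQ.
  split; first by exists x; exact: syn_refl.
  move=> K' HK' Hsub; case: (classic (exists w, K' w)) => [[w0 Hw0]|Hn].
  - right=> w Hw; apply: (BLRQ_sat HK') (Hw0).
    exact: syn_trans (Hsub _ Hw0) (syn_sym Hw).
  - by left=> w Hw; apply: Hn; exists w.
have [[HB [_ Hmin]] Hx] : is_atom L (At L x) /\ At L x x :=
  epsilon_spec _ (fun K => is_atom L K /\ K x) (ex_intro _ _ atom).
apply: functional_extensionality => z; apply: propositional_extensionality.
split.
- move=> Hz.
  have [H|H] := Hmin _ (class_BLRQ x)
    (fun w Hw => BLRQ_sat HB (syn_sym Hw) Hx).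
  + by exfalso; apply: (H x); exact: syn_refl.
  + exact: H.
- by move=> Hz; apply: (BLRQ_sat HB) (syn_sym Hz) Hx.
Qed.

End Reg.

Theorem proposition3p13 (A : finType) (L : lang A) :
  regular L ->
  exists phi : jstate (PSyn_dfa (lrev L)) -> jstate (jop (BLRQ_dfa L)),
    jsl_iso phi /\
    forall X x, proj1_sig (phi X) x <->
      (forall w, X (syn_cls (lrev L) w) -> ~ At L (rev w) x).
Proof.
move=> [Q [d [q0 [F HL0]]]].
have HL : forall w, L w = F (foldl d q0 w).
  by move=> w; apply: propositional_extensionality.
have AtE := At_eq HL.
pose Phi (X : Syn (lrev L) -> Prop) x :=
  forall w, X (syn_cls (lrev L) w) -> ~ At L (rev w) x.
have PhiB X : BLRQ L (Phi X).
  apply: (sat_BLRQ HL) => x y Hxy HX w Xw; rewrite AtE => Hy.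
  by apply: (HX w Xw); rewrite AtE; exact: syn_trans Hxy Hy.
have AtR w : At L w w by rewrite AtE; exact: syn_refl.
exists (fun X => exist (fun K => BLRQ L K) (Phi X) (PhiB X)).
split; last by move=> X x; exact: iff_refl.
split; first split.
- move=> X Y /=; symmetry; apply: jlargest_eq; split.
  + by split; apply/jle_iff => w /= H w' Xw'; apply: H; [left|right].
  + move=> t' [/jle_iff H1 /jle_iff H2]; apply/jle_iff => w Ht w' [Xw'|Yw'].
    * exact: H1 Ht w' Xw'.
    * exact: H2 Ht w' Yw'.
- symmetry; apply: jlargest_eq; split=> // t' _.
  by apply/jle_iff => w _ w' [].
- move=> a X /=; symmetry; apply: jlargest_eq; split.
  + apply/jle_iff => w /= H w' Xw' Hat.
    apply: (H (rcons w' a)); first by exists w'.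
    rewrite rev_rcons AtE; rewrite AtE in Hat; exact: syn_cons Hat.
  + move=> t' /jle_iff H; apply/jle_iff => x Ht w' [w0 [Xw0 E]] Hat.
    rewrite AtE in Hat.
    have E1 := proj1 (lrev_syn _ _ _) (cls_eq E); rewrite rev_rcons in E1.
    have Ht2 : proj1_sig t' (a :: rev w0).
      exact: (BLRQ_sat (proj2_sig t')) (syn_trans Hat E1) Ht.
    exact: (H (rev w0) Ht2 w0 Xw0 (AtR _)).
- symmetry; apply: jlargest_eq; split.
  + by move=> /= H; apply: (H [::]) => //; exact: AtR.
  + move=> t' Ht; apply/jle_iff => x Hx w Ew Hat; apply: Ht.
    rewrite AtE in Hat.
    have E1 := proj1 (lrev_syn _ _ _) (cls_eq Ew).
    exact: (BLRQ_sat (proj2_sig t')) (syn_trans Hat E1) Hx.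
- move=> X /=; split.
  + move=> H; apply: NNPP => Hn; apply: H; apply/jle_iff => x /= Lx w Xw Hat.
    apply: Hn; exists (syn_cls (lrev L) w); split=> //; exists w; split=> //.
    rewrite AtE in Hat; exact: (BLRQ_sat (BLRQ_self L)) Hat Lx.
  + move=> [c [Xc [w [Ec Sw]]]] Hle; subst c.
    have := proj1 (jle_iff _ _) Hle (rev w) Sw => /= Hp.
    exact: Hp w Xc (AtR _).
- exists (fun (t : BLRQ_state L) (c : Syn (lrev L)) =>
    exists w, c = syn_cls (lrev L) w /\ ~ proj1_sig t (rev w)).
  + move=> X; apply: functional_extensionality => c.
    apply: propositional_extensionality.
    have [w0 ->] := cls_surj c; split.
    * case=> w [E Hn]; apply: NNPP => HX; apply: Hn => w1 Xw1 Hat.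
      rewrite AtE in Hat.
      have E2 := cls_eq2 (proj2 (lrev_syn _ _ _) Hat).
      by apply: HX; rewrite E E2.
    * move=> Xw0; exists w0; split=> // H; exact: (H w0 Xw0 (AtR _)).
  + move=> t; apply: st_eq => x /=; split.
    * move=> H; apply: NNPP => Hn; apply: (H (rev x)).
      - by exists (rev x); split=> //; rewrite revK.
      - by rewrite revK; exact: AtR.
    * move=> Hx w [w' [E Hn]] Hat; apply: Hn; rewrite AtE in Hat.
      have E1 := proj1 (lrev_syn _ _ _) (cls_eq E).
      exact: (BLRQ_sat (proj2_sig t)) (syn_trans Hat E1) Hx.
Qed.
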